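(* Let $p$ be a prime, $n\ge 1$ an integer, $\mathbb{F}=\mathbb{F}_{p^n}$ and $F=|\mathbb{F}|=p^n$. Let $\theta,\gamma$ be real numbers. Suppose $f,g:\mathbb{F}\to[0,1]$ satisfy $f(m)\ge g(m)\ge 0$ for all $m\in\mathbb{F}$, and $\mathbb{E}(f)\ge \mathbb{E}(g)\ge F^{-\theta}$. If $$\|\hat f\|_{1/3}<F^{1+\gamma},$$ then $$\Lambda_3(f,g,f)\ \ge\ 10^{-10}p^{-8}F^{-12\theta-4\gamma}\quad\text{and}\quad \Lambda_3(g,f,f)\ \ge\ 10^{-10}p^{-8}F^{-12\theta-4\gamma}.$$
   Context: For $h:\mathbb{F}\to\mathbb{C}$, $\mathbb{E}(h)=F^{-1}\sum_{m\in\mathbb{F}}h(m)$. Identify $\mathbb{F}$ with $\mathbb{F}_p^n$ via a fixed standard $\mathbb{F}_p$-basis, and let $a\cdot m$ be the dot product with respect to this basis. With $\omega=e^{2\pi i/p}$, the Fourier transform is $\hat h(a)=\sum_{m\in\mathbb{F}}h(m)\omega^{a\cdot m}$. For $t>0$, $\|\hat h\|_t=\left(\sum_{a\in\mathbb{F}}|\hat h(a)|^t\right)^{1/t}$ (a quasinorm for $t<1$). For $f_1,f_2,f_3:\mathbb{F}\to\mathbb{C}$, $\Lambda_3(f_1,f_2,f_3)=F^{-2}\sum_{m,d\in\mathbb{F}}f_1(m)f_2(m+d)f_3(m+2d)$. *)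

(* Defs.v *)
From HB Require Import structures.
From mathcomp Require Import all_boot all_order all_algebra.
From mathcomp Require Import all_classical all_reals all_analysis.
From mathcomp Require Import complex.
Set Implicit Arguments. Unset Strict Implicit. Unset Printing Implicit Defensive.
Import Order.TTheory GRing.Theory Num.Theory.
Local Open Scope ring_scope.

(* The field F = F_{p^n} is identified (as an additive group with the
   standard F_p-basis) with row vectors 'rV['F_p]_n. *)
Notation FF p n := 'rV['F_p]_n.

Definition Fcard (R : realType) (p n : nat) : R := (p ^ n)%:R.

Definition Ex (R : realType) (p n : nat) (h : FF p n -> R) : R :=
  (Fcard R p n)^-1 * \sum_(m : FF p n) h m.

Definition dotF (p n : nat) (a m : FF p n) : 'F_p :=
  \sum_(i < n) a ord0 i * m ord0 i.

Definition omega (R : realType) (p : nat) : R[i] :=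
  (cos (2 * pi / p%:R) +i* sin (2 * pi / p%:R))%C.

Definition fourier (R : realType) (p n : nat) (h : FF p n -> R) (a : FF p n)
  : R[i] :=
  \sum_(m : FF p n) (h m)%:C%C * omega R p ^+ (val (dotF a m)).

Definition fnorm (R : realType) (p n : nat) (t : R) (h : FF p n -> R) : R :=
  powR (\sum_(a : FF p n) powR (Normc.normc (fourier h a)) t) t^-1.

Definition Lambda3 (R : realType) (p n : nat) (f1 f2 f3 : FF p n -> R) : R :=
  (Fcard R p n ^+ 2)^-1 *
  \sum_(m : FF p n) \sum_(d : FF p n) f1 m * f2 (m + d) * f3 (m + d *+ 2).

(* Main.v *)
Require Import Defs.
From HB Require Import structures.
From mathcomp Require Import all_boot all_order all_algebra.
From mathcomp Require Import all_classical all_reals all_analysis.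
From mathcomp Require Import complex.
From mathcomp Require Import ring lra.
Import Order.TTheory GRing.Theory Num.Theory.
Set Implicit Arguments. Unset Strict Implicit. Unset Printing Implicit Defensive.
Local Open Scope ring_scope.
Local Open Scope complex_scope.

Lemma omegaX (R : realType) (p k : nat) :
  omega R p ^+ k = (cos (k%:R * (2 * pi / p%:R)) +i* sin (k%:R * (2 * pi / p%:R)))%C.
Proof.
elim: k => [|k IH].
  by rewrite expr0 !mul0r cos0 sin0.
rewrite exprSr IH /omega; set t := 2 * pi / p%:R.
have -> : (k.+1)%:R = k%:R + 1 :> R by rewrite mulrSr.
rewrite mulrDl mul1r cosD sinD.
set a := cos _; set b := sin _; set c := cos _; set d := sin _.
by apply/eqP; rewrite eq_complex /= [b * c + _]addrC !eqxx.
Qed.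

Lemma omegaXp (R : realType) (p : nat) : (0 < p)%N -> omega R p ^+ p = 1.
Proof.
move=> p0; rewrite omegaX.
have -> : p%:R * (2 * pi / p%:R) = pi *+ 2 :> R.
  by rewrite mulrCA mulfV ?mulr1 ?mulr_natl // pnatr_eq0 -lt0n.
by rewrite cos2pi sin2pi.
Qed.

Lemma omegaX_neq1 (R : realType) (p k : nat) : (0 < k < p)%N -> omega R p ^+ k != 1.
Proof.
move=> /andP[k0 kp]; rewrite omegaX; apply/negP => /eqP [] hc _.
set x := k%:R * (2 * pi / p%:R) in hc.
have p0 : (0 < p)%N by apply: leq_ltn_trans kp.
have hx : 0 < x / 2 < pi.
  rewrite /x; apply/andP; split.
    apply: divr_gt0 => //; apply: mulr_gt0; first by rewrite ltr0n.
    by apply: divr_gt0; rewrite ?ltr0n // mulr_gt0 // pi_gt0.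
  have -> : k%:R * (2 * pi / p%:R) / 2 = pi * (k%:R / p%:R) :> R.
    by field; rewrite pnatr_eq0 -lt0n.
  rewrite -[X in _ < X]mulr1 ltr_pM2l ?pi_gt0 // ltr_pdivrMr ?ltr0n // mul1r.
  by rewrite ltr_nat.
have := sin_gt0_pi hx.
have : cos ((x / 2) *+ 2) = 1 by rewrite -mulr_natr -mulrA mulVf // mulr1.
rewrite cos_mulr2n cos2sin2 => h1 h2.
have : sin (x / 2) ^+ 2 = 0 by move: h1; set s := sin _; move=> h1; nra.
by move/eqP; rewrite sqrf_eq0 => /eqP h3; rewrite h3 ltxx in h2.
Qed.

Lemma normc_omegaX (R : realType) (p k : nat) : Normc.normc (omega R p ^+ k) = 1.
Proof. by rewrite omegaX /Normc.normc cos2Dsin2 sqrtr1. Qed.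


Definition ee (R : realType) (p n : nat) (a m : FF p n) : R[i] :=
  omega R p ^+ val (dotF a m).

Lemma E_add (R : realType) (p : nat) (x y : 'F_p) : prime p ->
  omega R p ^+ val (x + y) = omega R p ^+ val x * omega R p ^+ val y.
Proof.
move=> pp.
have oq : omega R p ^+ (Zp_trunc (pdiv p)).+2 = 1.
  by rewrite (Fp_cast pp) omegaXp ?prime_gt0.
have -> : val (x + y) = ((val x + val y) %% (Zp_trunc (pdiv p)).+2)%N by [].
rewrite -exprD [in RHS](divn_eq (val x + val y) (Zp_trunc (pdiv p)).+2) exprD mulnC exprM.
by rewrite oq expr1n mul1r.
Qed.

Lemma dotFDl (p n : nat) (a b m : FF p n) : dotF (a + b) m = dotF a m + dotF b m.
Proof. by rewrite /dotF -big_split; apply: eq_bigr => i _; rewrite !mxE mulrDl. Qed.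

Lemma dotFC (p n : nat) (a m : FF p n) : dotF a m = dotF m a.
Proof. by rewrite /dotF; apply: eq_bigr => i _; rewrite mulrC. Qed.

Lemma dotF0l (p n : nat) (m : FF p n) : dotF 0 m = 0.
Proof. by rewrite /dotF big1 // => i _; rewrite mxE mul0r. Qed.

Lemma eeDl (R : realType) (p n : nat) (a b m : FF p n) : prime p ->
  ee R (a + b) m = ee R a m * ee R b m.
Proof. by move=> pp; rewrite /ee dotFDl E_add. Qed.

Lemma eeC (R : realType) (p n : nat) (a m : FF p n) : ee R a m = ee R m a.
Proof. by rewrite /ee dotFC. Qed.

Lemma ee0l (R : realType) (p n : nat) (m : FF p n) : ee R 0 m = 1.
Proof. by rewrite /ee dotF0l expr0. Qed.

Lemma eeDr (R : realType) (p n : nat) (a m m' : FF p n) : prime p ->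
  ee R a (m + m') = ee R a m * ee R a m'.
Proof. by move=> pp; rewrite eeC eeDl // -!(eeC _ a). Qed.

Lemma ee0r (R : realType) (p n : nat) (m : FF p n) : ee R m 0 = 1.
Proof. by rewrite eeC ee0l. Qed.

Lemma normc_ee (R : realType) (p n : nat) (a m : FF p n) : Normc.normc (ee R a m) = 1.
Proof. exact: normc_omegaX. Qed.

Lemma ee_dot (R : realType) (p n : nat) (a b c d m m' k l : FF p n) : prime p ->
  dotF a m + dotF b m' = dotF c k + dotF d l ->
  ee R a m * ee R b m' = ee R c k * ee R d l.
Proof. by move=> pp h; rewrite /ee -!E_add // h. Qed.

Lemma sum_ee (R : realType) (p n : nat) (m : FF p n) : prime p ->
  \sum_(a : FF p n) ee R a m = if m == 0 then (p ^ n)%:R else 0.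
Proof.
move=> pp; case: eqP => [->|/eqP m0].
  under eq_bigr => a _ do rewrite ee0r.
  by rewrite sumr_const card_mx card_Fp // mul1n.
have [i mi] : exists i, m ord0 i != 0.
  case: (pickP (fun i => m ord0 i != 0)) => [i hi|h]; first by exists i.
  exfalso; move/eqP: m0; apply; apply/rowP => j; rewrite mxE.
  by move: (h j) => /= /negbFE/eqP; rewrite (ord1 ord0).
set a0 : FF p n := delta_mx ord0 i.
have da : dotF a0 m = m ord0 i.
  rewrite /dotF (bigD1 i) //= big1 ?addr0; first by rewrite mxE !eqxx mul1r.
  by move=> j /negPf ji; rewrite mxE ji andbF mul0r.
have h1 : ee R a0 m != 1.
  rewrite /ee da; apply: omegaX_neq1; apply/andP; split.
    by rewrite lt0n; apply: contra mi => /eqP h; apply/eqP/val_inj.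
  by apply: leq_trans (ltn_ord (m ord0 i)) _; rewrite (Fp_cast pp).
set S := \sum_a _.
have hS : S = ee R a0 m * S.
  rewrite {2}/S mulr_sumr /S (reindex_inj (addrI a0)); apply: eq_bigr => a _.
  by rewrite eeDl.
apply/eqP; move: hS => /eqP; rewrite -subr_eq0 -{1}[S]mul1r -mulrBl mulf_eq0.
by rewrite subr_eq0 eq_sym (negPf h1).
Qed.


Lemma fourierE (R : realType) (p n : nat) (h : FF p n -> R) (a : FF p n) :
  fourier h a = \sum_m (h m)%:C * ee R a m.
Proof. by []. Qed.

Lemma inversion (R : realType) (p n : nat) (h : FF p n -> R) (z : FF p n) : prime p ->
  (p ^ n)%:R * (h z)%:C = \sum_c fourier h c * ee R c (- z).
Proof.
move=> pp.
under eq_bigr => c _ do rewrite fourierE mulr_suml.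
rewrite exchange_big /=.
under eq_bigr => m _ do under eq_bigr => c _ do rewrite -mulrA -eeDr //.
under eq_bigr => m _ do rewrite -mulr_sumr sum_ee //.
rewrite (bigD1 z) //= subrr eqxx big1 ?addr0; first by rewrite mulrC.
by move=> m /negPf mz; rewrite subr_eq0 mz mulr0.
Qed.

Definition UU (R : realType) (p n : nat) (f1 f2 f3 : FF p n -> R) (xi : FF p n) : R[i] :=
  \sum_m \sum_d (f1 m * f2 (m + d) * f3 (m + d *+ 2))%:C * ee R xi d.

Lemma dot_id (p n : nat) (xi c m y : FF p n) :
  dotF xi (y - m) + dotF c (- (m + (y - m) *+ 2)) =
  dotF (c - xi) m + dotF (xi - c *+ 2) y.
Proof.
rewrite /dotF -!big_split /=; apply: eq_bigr => i _.
rewrite !mxE; ring.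
Qed.

Lemma UU_fourier (R : realType) (p n : nat) (f1 f2 f3 : FF p n -> R) (xi : FF p n) :
  prime p ->
  (p ^ n)%:R * UU f1 f2 f3 xi =
  \sum_c fourier f3 c * fourier f1 (c - xi) * fourier f2 (xi - c *+ 2).
Proof.
move=> pp; rewrite /UU mulr_sumr.
have step : forall m, (p ^ n)%:R * (\sum_d (f1 m * f2 (m + d) * f3 (m + d *+ 2))%:C * ee R xi d)
  = \sum_c fourier f3 c * \sum_y (f1 m)%:C * (f2 y)%:C * (ee R (c - xi) m * ee R (xi - c *+ 2) y).
  move=> m; rewrite mulr_sumr.
  under eq_bigr => d _ do rewrite rmorphM /= mulrAC mulrCA inversion // mulr_sumr.
  rewrite exchange_big /=; apply: eq_bigr => c _; rewrite mulr_sumr.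
  rewrite (reindex_inj (addIr (- m))) /=; apply: eq_bigr => y _.
  have -> : m + (y - m) = y by rewrite addrC subrK.
  rewrite -(ee_dot R pp (dot_id xi c m y)) rmorphM /=.
  set A := ee R xi _; set B := ee R c _; set C := fourier f3 c.
  by rewrite mulrC !mulrA [C * _]mulrC [_ * A * _]mulrC !mulrA.
under eq_bigr => m _ do rewrite step.
rewrite exchange_big /=; apply: eq_bigr => c _.
rewrite -mulr_sumr -mulrA; congr (_ * _).
rewrite !fourierE mulr_suml; apply: eq_bigr => m _; rewrite mulr_sumr.
by apply: eq_bigr => y _; ring.
Qed.


Definition cr (R : realType) (x : R) : R := powR x (3%:R^-1).

Lemma cr_ge0 (R : realType) (x : R) : 0 <= cr x.
Proof. exact: powR_ge0. Qed.

Lemma cr3 (R : realType) (x : R) : 0 <= x -> cr x ^+ 3 = x.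
Proof.
move=> x0; rewrite /cr -powR_mulrn ?powR_ge0 // -powRrM mulVf ?powRr1 //.
Qed.

Lemma cube_le (R : realType) (a b : R) : 0 <= a -> a <= b -> a ^+ 3 <= b ^+ 3.
Proof.
move=> a0 ab; have b0 := le_trans a0 ab.
have h : 0 <= (b - a) * (b ^+ 2 + a * b + a ^+ 2).
  by apply: mulr_ge0; [rewrite subr_ge0 | rewrite !addr_ge0 ?mulr_ge0 ?exprn_ge0].
have -> : b ^+ 3 = a ^+ 3 + (b - a) * (b ^+ 2 + a * b + a ^+ 2) by ring.
by rewrite lerDl.
Qed.

Lemma sq_le_inv (R : realType) (a b : R) : 0 <= b -> a ^+ 2 <= b ^+ 2 -> a <= b.
Proof.
move=> b0 h; case: (lerP a 0) => a0; first exact: le_trans a0 b0.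
nra.
Qed.

Lemma sum_cubes (R : realType) (I : finType) (a : I -> R) :
  (forall i, 0 <= a i) -> \sum_i a i ^+ 3 <= (\sum_i a i) ^+ 3.
Proof.
move=> a0.
suff [] : \sum_i a i ^+ 3 <= (\sum_i a i) ^+ 3 /\ 0 <= \sum_i a i by [].
apply: (@big_ind2 R R (fun x y => x <= y ^+ 3 /\ 0 <= y) 0 +%R 0 +%R) => [|x1 x2 y1 y2 [h2 h1] [h4 h3]|i _].
- by rewrite expr0n /=.
- split; last by rewrite addr_ge0.
  have : x2 ^+ 3 + y2 ^+ 3 <= (x2 + y2) ^+ 3 by nra.
  by move=> h; apply: le_trans h; apply: lerD.
- by split.
Qed.

Lemma final_real (R : realType) (I : finType) (Fr d U0 s t r G0 : R) (x w : I -> R) :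
  0 < Fr -> 0 < d -> 0 <= s -> 0 <= t -> 0 < r -> t ^+ 3 = Fr * d -> r ^+ 3 = Fr ->
  (forall i, 0 <= x i) -> (forall i, 0 <= w i) -> \sum_i w i = s ^+ 2 ->
  (forall i, x i <= U0) -> (forall i, x i <= (t * w i / r) ^+ 3) ->
  Fr * G0 <= \sum_i x i -> Fr * d ^+ 3 <= G0 -> 0 <= U0 ->
  Fr ^+ 3 * d ^+ 4 <= U0 * s ^+ 3.
Proof.
move=> F0 d0 s0 t0 r0 ht hr x0 w0 hw hxU hxw hG hG0 U00.
set M := cr U0.
have M0 : 0 <= M := cr_ge0 U0.
have M3 : M ^+ 3 = U0 := cr3 U00.
have hx : forall i, x i <= M ^+ 2 * (t * w i / r).
  move=> i; have y0 : 0 <= t * w i / r by rewrite divr_ge0 ?mulr_ge0 // ltW.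
  move: y0 (hxw i) (hxU i); set y := t * w i / r => y0 h1 h2.
  case: (lerP y M) => hy.
    apply: le_trans h1 _; rewrite exprSr; apply: ler_wpM2r => //.
    have : y * y <= M * M by apply: ler_pM.
    by rewrite !expr2.
  apply: le_trans h2 _; rewrite -M3 exprSr; apply: ler_wpM2l; [exact: exprn_ge0 | exact: ltW].
have hs : \sum_i x i <= M ^+ 2 * (t * s ^+ 2 / r).
  apply: le_trans (ler_sum _ (fun i _ => hx i)) _.
  rewrite -mulr_sumr; apply: ler_wpM2l; first exact: exprn_ge0.
  by rewrite -mulr_suml -mulr_sumr hw.
have h1 : r * (Fr ^+ 2 * d ^+ 3) <= M ^+ 2 * t * s ^+ 2.
  have : Fr * (Fr * d ^+ 3) <= M ^+ 2 * (t * s ^+ 2 / r).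
    apply: le_trans _ hs; apply: le_trans _ hG; apply: ler_wpM2l => //; exact: ltW.
  move=> h.
  have h' : r * (Fr * (Fr * d ^+ 3)) <= r * (M ^+ 2 * (t * s ^+ 2 / r)).
    by apply: ler_wpM2l => //; exact: ltW.
  have e : r * (M ^+ 2 * (t * s ^+ 2 / r)) = M ^+ 2 * t * s ^+ 2.
    by field; rewrite gt_eqF.
  rewrite e in h'.
  have e2 : r * (Fr ^+ 2 * d ^+ 3) = r * (Fr * (Fr * d ^+ 3)) by ring.
  by rewrite e2.
have h2 := cube_le (mulr_ge0 (ltW r0) (mulr_ge0 (exprn_ge0 2 (ltW F0)) (exprn_ge0 3 (ltW d0)))) h1.
have e1 : (r * (Fr ^+ 2 * d ^+ 3)) ^+ 3 = (Fr * d) * (Fr ^+ 3 * d ^+ 4) ^+ 2.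
  by rewrite !exprMn hr; ring.
have e2 : (M ^+ 2 * t * s ^+ 2) ^+ 3 = (Fr * d) * (U0 * s ^+ 3) ^+ 2.
  rewrite !exprMn ht -M3; ring.
rewrite e1 e2 ler_pM2l ?mulr_gt0 // in h2.
apply: sq_le_inv h2; rewrite mulr_ge0 ?exprn_ge0 //.
Qed.


Lemma pow_le (R : realType) (a b : R) (k : nat) : 0 <= a -> a <= b -> a ^+ k <= b ^+ k.
Proof.
move=> a0 ab; elim: k => [|k IH]; first by rewrite !expr0.
by rewrite !exprS; apply: ler_pM => //; exact: exprn_ge0.
Qed.

Lemma final2 (R : realType) (P Fr d U0 s theta gamma : R) :
  1 <= P -> 0 < Fr -> 0 < d -> d <= 1 -> Fr * d <= s ^+ 3 ->
  s ^+ 3 < powR Fr (1 + gamma) -> powR Fr (- theta) <= d ->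
  Fr ^+ 3 * d ^+ 4 <= U0 * s ^+ 3 ->
  (10 ^+ 10)^-1 * (P ^+ 8)^-1 * powR Fr (- (12%:R * theta) - 4%:R * gamma)
    <= (Fr ^+ 2)^-1 * U0.
Proof.
move=> P1 F0 d0 d1 hS hSB hA hU.
have Fn0 : Fr != 0 by rewrite gt_eqF.
set A := powR Fr (- theta); set B := powR Fr gamma; set S := s ^+ 3.
have A0 : 0 <= A := powR_ge0 _ _.
have B0 : 0 < B := powR_gt0 _ F0.
have e1 : powR Fr (1 + gamma) = Fr * B.
  by rewrite powRD ?Fn0 ?implybT // powRr1 // (ltW F0).
have e2 : powR Fr (- (12%:R * theta) - 4%:R * gamma) = A ^+ 12 * (B ^+ 4)^-1.
  rewrite powRD ?Fn0 ?implybT //; congr (_ * _).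
    by rewrite -mulrN mulrC powRrM powR_mulrn.
  by rewrite powRN mulrC powRrM powR_mulrn // (ltW B0).
rewrite e2; rewrite e1 in hSB; rewrite -/S in hS hU.
have S0 : 0 < S by apply: lt_le_trans hS; rewrite mulr_gt0.
have key : A ^+ 12 * Fr ^+ 2 <= U0 * B ^+ 4.
  have hq : 0 < S * Fr ^+ 4 by rewrite mulr_gt0 // exprn_gt0.
  rewrite -(ler_pM2r hq).
  have l1 : A ^+ 12 * Fr ^+ 2 * (S * Fr ^+ 4) <= d ^+ 12 * Fr ^+ 2 * (S * Fr ^+ 4).
    rewrite ler_pM2r // ler_pM2r ?exprn_gt0 //; exact: pow_le 12 A0 hA.
  apply: le_trans l1 _.
  have l2 : Fr ^+ 3 * d ^+ 4 * S ^+ 4 <= U0 * B ^+ 4 * (S * Fr ^+ 4).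
    have -> : U0 * B ^+ 4 * (S * Fr ^+ 4) = (U0 * S) * (Fr * B) ^+ 4 by ring.
    apply: ler_pM; [exact: mulr_ge0 (exprn_ge0 _ (ltW F0)) (exprn_ge0 _ (ltW d0)) | exact: exprn_ge0 _ (ltW S0) | exact: hU | exact: pow_le 4 (ltW S0) (ltW hSB)].
  apply: le_trans l2.
  have -> : d ^+ 12 * Fr ^+ 2 * (S * Fr ^+ 4) = (Fr ^+ 3 * d ^+ 4 * S) * (d ^+ 8 * Fr ^+ 3) by ring.
  have -> : Fr ^+ 3 * d ^+ 4 * S ^+ 4 = (Fr ^+ 3 * d ^+ 4 * S) * S ^+ 3 by ring.
  have hp2 : 0 < Fr ^+ 3 * d ^+ 4 * S by apply: mulr_gt0 => //; apply: mulr_gt0; apply: exprn_gt0.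
  rewrite ler_pM2l //.
  apply: le_trans (pow_le 3 (mulr_ge0 (ltW F0) (ltW d0)) hS).
  have -> : (Fr * d) ^+ 3 = d ^+ 3 * Fr ^+ 3 by ring.
  rewrite ler_pM2r ?exprn_gt0 //.
  have -> : d ^+ 8 = d ^+ 3 * d ^+ 5 by rewrite -exprD.
  rewrite -[X in _ <= X]mulr1 ler_pM2l ?exprn_gt0 //.
  by apply: exprn_ile1 => //; exact: ltW.
have P0 : 0 < P := lt_le_trans ltr01 P1.
have c0 : 0 <= (10 ^+ 10)^-1 * (P ^+ 8)^-1 :> R.
  by rewrite mulr_ge0 // invr_ge0 exprn_ge0 // (ltW P0).
have c1 : (10 ^+ 10)^-1 * (P ^+ 8)^-1 <= 1 :> R.
  rewrite -[X in _ <= X]mulr1; apply: ler_pM.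
  - by rewrite invr_ge0 exprn_ge0.
  - by rewrite invr_ge0 exprn_ge0 // (ltW P0).
  - by rewrite invf_le1 ?exprn_gt0 // exprn_ege1 // ler1n.
  - by rewrite invf_le1 ?exprn_gt0 // exprn_ege1.
have h3 : A ^+ 12 * (B ^+ 4)^-1 <= (Fr ^+ 2)^-1 * U0.
  have -> : (Fr ^+ 2)^-1 * U0 = (U0 * B ^+ 4) / (Fr ^+ 2 * B ^+ 4).
    by field; rewrite Fn0 gt_eqF.
  have -> : A ^+ 12 * (B ^+ 4)^-1 = (A ^+ 12 * Fr ^+ 2) / (Fr ^+ 2 * B ^+ 4).
    by field; rewrite Fn0 gt_eqF.
  have hpos : 0 < (Fr ^+ 2 * B ^+ 4)^-1 by rewrite invr_gt0 mulr_gt0 ?exprn_gt0.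
  by rewrite ler_pM2r.
apply: le_trans h3; rewrite -[X in _ <= X]mul1r; apply: ler_wpM2r => //.
by rewrite mulr_ge0 ?exprn_ge0 // invr_ge0 exprn_ge0 // ltW.
Qed.


Lemma normc_ge0 (R : realType) (z : R[i]) : 0 <= Normc.normc z.
Proof. by case: z => a b; rewrite /Normc.normc sqrtr_ge0. Qed.

Lemma normc_real (R : realType) (x : R) : Normc.normc (x%:C) = `|x|.
Proof. by rewrite /Normc.normc /= expr0n /= addr0 sqrtr_sqr. Qed.

Lemma normc_nat (R : realType) (k : nat) : Normc.normc (k%:R : R[i]) = k%:R.
Proof. by rewrite -(rmorph_nat (real_complex R)) normc_real ger0_norm. Qed.

Lemma normc_sum (R : realType) (I : finType) (F : I -> R[i]) :
  Normc.normc (\sum_i F i) <= \sum_i Normc.normc (F i).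
Proof.
apply: (@big_ind2 R[i] R (fun x y => Normc.normc x <= y)) => //.
- by rewrite Normc.normc0.
- move=> x1 x2 y1 y2 h1 h2; apply: le_trans (le_normcD x1 y1) _.
  exact: lerD.
Qed.

Lemma fourier_le (R : realType) (p n : nat) (h : FF p n -> R) (a : FF p n) :
  (forall m, 0 <= h m) -> Normc.normc (fourier h a) <= \sum_m h m.
Proof.
move=> h0; rewrite fourierE; apply: le_trans (normc_sum _) _.
apply: ler_sum => m _; rewrite Normc.normcM normc_ee mulr1 normc_real ger0_norm //.
Qed.

Lemma fourier0 (R : realType) (p n : nat) (h : FF p n -> R) :
  (forall m, 0 <= h m) -> Normc.normc (fourier h 0) = \sum_m h m.
Proof.
move=> h0; rewrite fourierE.
under eq_bigr => m _ do rewrite ee0l mulr1.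
by rewrite -rmorph_sum normc_real ger0_norm // sumr_ge0.
Qed.

Lemma UU_le (R : realType) (p n : nat) (f1 f2 f3 : FF p n -> R) (xi : FF p n) :
  (forall m, 0 <= f1 m) -> (forall m, 0 <= f2 m) -> (forall m, 0 <= f3 m) ->
  Normc.normc (UU f1 f2 f3 xi) <=
  \sum_m \sum_d f1 m * f2 (m + d) * f3 (m + d *+ 2).
Proof.
move=> h1 h2 h3; rewrite /UU; apply: le_trans (normc_sum _) _.
apply: ler_sum => m _; apply: le_trans (normc_sum _) _.
apply: ler_sum => d _; rewrite Normc.normcM normc_ee mulr1 normc_real ger0_norm //.
by rewrite !mulr_ge0.
Qed.

Lemma UU_sum (R : realType) (p n : nat) (f1 f2 f3 : FF p n -> R) : prime p ->
  \sum_xi UU f1 f2 f3 xi = (p ^ n)%:R * (\sum_m f1 m * f2 m * f3 m)%:C.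
Proof.
move=> pp; rewrite /UU exchange_big /= rmorph_sum mulr_sumr; apply: eq_bigr => m _.
rewrite exchange_big /=.
under eq_bigr => d _ do rewrite -mulr_sumr sum_ee //.
rewrite (bigD1 0) //= eqxx big1 ?addr0; first by rewrite mul0rn !addr0 mulrC.
by move=> d /negPf ->; rewrite mulr0.
Qed.


Lemma xbound (R : realType) (I : finType) (Fr t r x : R) (u v e : I -> R) :
  0 < Fr -> 0 < r -> r ^+ 3 = Fr -> 0 <= t ->
  (forall c, 0 <= u c) -> (forall c, 0 <= v c) -> (forall c, 0 <= e c) ->
  (forall c, e c <= t ^+ 3) ->
  Fr * x <= \sum_c u c ^+ 3 * v c ^+ 3 * e c ->
  x <= (t * (\sum_c u c * v c) / r) ^+ 3.
Proof.
move=> F0 r0 hr t0 u0 v0 e0 et h.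
have h1 : \sum_c u c ^+ 3 * v c ^+ 3 * e c <= \sum_c (u c * v c * t) ^+ 3.
  apply: ler_sum => c _; rewrite !exprMn; apply: ler_wpM2l => //.
  by rewrite mulr_ge0 ?exprn_ge0.
have h2 := sum_cubes (fun c => mulr_ge0 (mulr_ge0 (u0 c) (v0 c)) t0).
rewrite -mulr_suml in h2.
have h3 : Fr * x <= (\sum_c u c * v c) ^+ 3 * t ^+ 3.
  by rewrite -exprMn; apply: le_trans h (le_trans h1 h2).
have -> : (t * (\sum_c u c * v c) / r) ^+ 3 = ((\sum_c u c * v c) ^+ 3 * t ^+ 3) / Fr.
  by rewrite -hr; field; rewrite gt_eqF.
by rewrite ler_pdivlMr // mulrC.
Qed.

Lemma core (R : realType) (p n : nat) (f1 f2 f3 : FF p n -> R) (s d : R) (w : FF p n -> R) :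
  prime p -> (forall m, 0 <= f1 m) -> (forall m, 0 <= f2 m) -> (forall m, 0 <= f3 m) ->
  0 < d -> 0 <= s -> (forall xi, 0 <= w xi) -> \sum_xi w xi = s ^+ 2 ->
  (forall xi, Normc.normc (UU f1 f2 f3 xi) <=
     (cr ((p ^ n)%:R * d) * w xi / cr (p ^ n)%:R) ^+ 3) ->
  (p ^ n)%:R * d ^+ 3 <= \sum_m f1 m * f2 m * f3 m ->
  ((p ^ n)%:R : R) ^+ 3 * d ^+ 4 <=
    (\sum_m \sum_d f1 m * f2 (m + d) * f3 (m + d *+ 2)) * s ^+ 3.
Proof.
move=> pp h1 h2 h3 d0 s0 w0 hw hx hG.
have F0 : 0 < (p ^ n)%:R :> R by rewrite ltr0n expn_gt0 prime_gt0.
apply: (@final_real R (FF p n) _ d _ s (cr ((p ^ n)%:R * d)) (cr (p ^ n)%:R)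
  (\sum_m f1 m * f2 m * f3 m) (fun xi => Normc.normc (UU f1 f2 f3 xi)) w) => //.
- exact: cr_ge0.
- exact: powR_gt0.
- by rewrite cr3 // mulr_ge0 // ltW.
- by rewrite cr3 // ltW.
- by move=> xi; exact: normc_ge0.
- by move=> xi; exact: UU_le.
- apply: le_trans (normc_sum _); rewrite UU_sum // Normc.normcM normc_nat.
  by rewrite normc_real ger0_norm // sumr_ge0 // => m _; rewrite !mulr_ge0.
- apply: sumr_ge0 => m _; apply: sumr_ge0 => e _; rewrite !mulr_ge0 //.
Qed.


Definition phi (R : realType) (p n : nat) (f : FF p n -> R) (c : FF p n) : R :=
  cr (Normc.normc (fourier f c)).

Lemma phi3 (R : realType) (p n : nat) (f : FF p n -> R) (c : FF p n) :
  phi f c ^+ 3 = Normc.normc (fourier f c).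
Proof. by rewrite /phi cr3 // normc_ge0. Qed.

Lemma phi_ge0 (R : realType) (p n : nat) (f : FF p n -> R) (c : FF p n) : 0 <= phi f c.
Proof. exact: cr_ge0. Qed.

Lemma case1_x (R : realType) (p n : nat) (f g : FF p n -> R) (d : R) (xi : FF p n) :
  prime p -> (forall m, 0 <= f m) -> (forall m, 0 <= g m) ->
  \sum_m g m = (p ^ n)%:R * d -> 0 < d ->
  Normc.normc (UU f g f xi) <=
    (cr ((p ^ n)%:R * d) * (\sum_c phi f c * phi f (c - xi)) / cr (p ^ n)%:R) ^+ 3.
Proof.
move=> pp f0 g0 hg d0.
have F0 : 0 < (p ^ n)%:R :> R by rewrite ltr0n expn_gt0 prime_gt0.
apply: (@xbound R (FF p n) (p ^ n)%:R _ _ _ (phi f) (fun c => phi f (c - xi))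
   (fun c => Normc.normc (fourier g (xi - c *+ 2)))) => //.
- exact: powR_gt0.
- by rewrite cr3 // ltW.
- exact: cr_ge0.
- by move=> c; exact: phi_ge0.
- by move=> c; exact: phi_ge0.
- by move=> c; exact: normc_ge0.
- by move=> c; rewrite cr3 ?(mulr_ge0 (ltW F0) (ltW d0)) // -hg; exact: fourier_le.
- rewrite -normc_nat -Normc.normcM UU_fourier //; apply: le_trans (normc_sum _) _.
  by apply: ler_sum => c _; rewrite !Normc.normcM !phi3.
Qed.

Lemma case2_x (R : realType) (p n : nat) (f g : FF p n -> R) (d : R) (xi : FF p n) :
  prime p -> (forall m, 0 <= f m) -> (forall m, 0 <= g m) ->
  \sum_m g m = (p ^ n)%:R * d -> 0 < d ->
  Normc.normc (UU g f f xi) <=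
    (cr ((p ^ n)%:R * d) * (\sum_c phi f c * phi f (xi - c *+ 2)) / cr (p ^ n)%:R) ^+ 3.
Proof.
move=> pp f0 g0 hg d0.
have F0 : 0 < (p ^ n)%:R :> R by rewrite ltr0n expn_gt0 prime_gt0.
apply: (@xbound R (FF p n) (p ^ n)%:R _ _ _ (phi f) (fun c => phi f (xi - c *+ 2))
   (fun c => Normc.normc (fourier g (c - xi)))) => //.
- exact: powR_gt0.
- by rewrite cr3 // ltW.
- exact: cr_ge0.
- by move=> c; exact: phi_ge0.
- by move=> c; exact: phi_ge0.
- by move=> c; exact: normc_ge0.
- by move=> c; rewrite cr3 ?(mulr_ge0 (ltW F0) (ltW d0)) // -hg; exact: fourier_le.
- rewrite -normc_nat -Normc.normcM UU_fourier //; apply: le_trans (normc_sum _) _.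
  by apply: ler_sum => c _; rewrite !Normc.normcM !phi3 mulrAC.
Qed.

Lemma sum_w1 (R : realType) (p n : nat) (f : FF p n -> R) :
  \sum_xi \sum_c phi f c * phi f (c - xi) = (\sum_c phi f c) ^+ 2.
Proof.
rewrite exchange_big /= expr2 mulr_suml; apply: eq_bigr => c _; rewrite -mulr_sumr.
congr (_ * _); rewrite (reindex_inj (inv_inj (subKr c))) /=.
by apply: eq_bigr => xi _; rewrite subKr.
Qed.

Lemma sum_w2 (R : realType) (p n : nat) (f : FF p n -> R) :
  \sum_xi \sum_c phi f c * phi f (xi - c *+ 2) = (\sum_c phi f c) ^+ 2.
Proof.
rewrite exchange_big /= expr2 mulr_suml; apply: eq_bigr => c _; rewrite -mulr_sumr.
congr (_ * _); rewrite (reindex_inj (addIr (c *+ 2))) /=.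
by apply: eq_bigr => xi _; rewrite addrK.
Qed.


Lemma G0_bound (R : realType) (p n : nat) (f g : FF p n -> R) (d : R) :
  prime p -> (forall m, 0 <= g m) -> (forall m, g m <= f m) ->
  \sum_m g m = (p ^ n)%:R * d -> 0 <= d ->
  (p ^ n)%:R * d ^+ 3 <= \sum_m g m * f m * f m.
Proof.
move=> pp g0 gf hg d0.
have h : forall m, 3%:R * d ^+ 2 * g m - 2%:R * d ^+ 3 <= g m * f m * f m.
  move=> m; have := g0 m; have := gf m; move: (g m) (f m) => x y h1 h2.
  have e : x ^+ 3 <= x * y * y.
    have k : 0 <= x * ((y - x) * (y + x)).
      by apply: mulr_ge0 => //; apply: mulr_ge0; lra.
    have -> : x * y * y = x ^+ 3 + x * ((y - x) * (y + x)) by ring.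
    by rewrite lerDl.
  apply: le_trans e.
  have k : 0 <= (x - d) ^+ 2 * (x + 2%:R * d) by apply: mulr_ge0; [exact: sqr_ge0 | lra].
  have -> : x ^+ 3 = 3%:R * d ^+ 2 * x - 2%:R * d ^+ 3 + (x - d) ^+ 2 * (x + 2%:R * d) by ring.
  by rewrite lerDl.
apply: le_trans (ler_sum _ (fun m _ => h m)).
rewrite sumrB -mulr_sumr hg sumr_const card_mx card_Fp // mul1n -mulr_natr.
by rewrite le_eqVlt; apply/orP; left; apply/eqP; ring.
Qed.

Close Scope complex_scope.
Unset Implicit Arguments. Set Strict Implicit.

Theorem corollary1 (R : realType) (p n : nat) (theta gamma : R)
  (f g : FF p n -> R) :
  prime p -> (1 <= n)%N ->
  (forall m, 0 <= f m <= 1) -> (forall m, 0 <= g m <= 1) ->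
  (forall m, f m >= g m /\ g m >= 0) ->
  Ex f >= Ex g -> Ex g >= powR (Fcard R p n) (- theta) ->
  fnorm (3%:R^-1) f < powR (Fcard R p n) (1 + gamma) ->
  Lambda3 f g f >= (10 ^+ 10)^-1 * (p%:R ^+ 8)^-1
                    * powR (Fcard R p n) (- (12%:R * theta) - 4%:R * gamma)
  /\ Lambda3 g f f >= (10 ^+ 10)^-1 * (p%:R ^+ 8)^-1
                    * powR (Fcard R p n) (- (12%:R * theta) - 4%:R * gamma).
Proof.
move=> pp n1 hf hg hfg hEx hEg hN.
have f0 : forall m, 0 <= f m by move=> m; case/andP: (hf m).
have g0 : forall m, 0 <= g m by move=> m; case/andP: (hg m).
have gf : forall m, g m <= f m by move=> m; case: (hfg m).
have F0 : 0 < (p ^ n)%:R :> R by rewrite ltr0n expn_gt0 prime_gt0.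
have P1 : 1 <= p%:R :> R by rewrite ler1n prime_gt0.
rewrite /Lambda3 /Fcard in hEg hN *.
set d := Ex g in hEg *.
have hsg : \sum_m g m = (p ^ n)%:R * d.
  by rewrite /d /Ex /Fcard mulrA mulfV ?mul1r // gt_eqF.
have d0 : 0 < d := lt_le_trans (powR_gt0 _ F0) hEg.
have d1 : d <= 1.
  rewrite /d /Ex /Fcard ler_pdivrMl // mulr1.
  apply: le_trans (ler_sum _ (fun m _ => proj2 (andP (hg m)))) _.
  by rewrite sumr_const card_mx card_Fp // mul1n.
set s := \sum_c phi f c.
have s0 : 0 <= s by apply: sumr_ge0 => c _; exact: phi_ge0.
have hs3 : fnorm (3%:R^-1) f = s ^+ 3.
  by rewrite /fnorm invrK powR_mulrn.
rewrite hs3 in hN.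
have hsd : (p ^ n)%:R * d <= s ^+ 3.
  have h1 : phi f 0 <= s.
    by rewrite /s (bigD1 0) //= lerDl sumr_ge0 // => c _; exact: phi_ge0.
  have := cube_le (phi_ge0 f 0) h1; rewrite phi3 fourier0 //; apply: le_trans.
  by rewrite -hsg; apply: ler_sum => m _; exact: gf.
split.
- have G0 : (p ^ n)%:R * d ^+ 3 <= \sum_m f m * g m * f m.
    have -> : \sum_m f m * g m * f m = \sum_m g m * f m * f m.
      by apply: eq_bigr => m _; rewrite [f m * g m]mulrC.
    exact: G0_bound pp g0 gf hsg (ltW d0).
  have k := @core R p n f g f s d (fun xi => \sum_c phi f c * phi f (c - xi)) pp f0 g0 f0 d0 s0
    (fun xi => sumr_ge0 _ (fun c _ => mulr_ge0 (phi_ge0 f c) (phi_ge0 f (c - xi))))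
    (sum_w1 f) (fun xi => case1_x xi pp f0 g0 hsg d0) G0.
  exact: final2 P1 F0 d0 d1 hsd hN hEg k.
- have G0 : (p ^ n)%:R * d ^+ 3 <= \sum_m g m * f m * f m by exact: G0_bound pp g0 gf hsg (ltW d0).
  have k := @core R p n g f f s d (fun xi => \sum_c phi f c * phi f (xi - c *+ 2)) pp g0 f0 f0 d0 s0
    (fun xi => sumr_ge0 _ (fun c _ => mulr_ge0 (phi_ge0 f c) (phi_ge0 f (xi - c *+ 2))))
    (sum_w2 f) (fun xi => case2_x xi pp f0 g0 hsg d0) G0.
  exact: final2 P1 F0 d0 d1 hsd hN hEg k.
Qed.
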